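(* Let $X$ be a Minkowski space and let $A=\{\mathbf{x}_1,\dots,\mathbf{x}_{2k+1}\}\subset X$ be a $d$-collinear set of odd size, listed in its natural order. Then $\mathrm{FT}(A)=\{\mathbf{x}_{k+1}\}$.
   Context: A Minkowski space is a finite-dimensional real normed space $(X,\|\cdot\|)$. A metric line is a subset of $X$ isometric to $\mathbb{R}$; a set is $d$-collinear if it is contained in a metric line. A finite $d$-collinear set $\{\mathbf{x}_1,\dots,\mathbf{x}_m\}$ is listed in its natural order if there is an isometry $f$ from it onto a subset of $\mathbb{R}$ with $f(\mathbf{x}_1)<\dots<f(\mathbf{x}_m)$. $\mathrm{FT}(A)$ is the set of minimizers of $\mathbf{x}\mapsto\sum_{\mathbf{a}\in A}\|\mathbf{x}-\mathbf{a}\|$. *)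

(* Defs.v *)
(* a Minkowski space is a normedModType over a
   realType R that is finite-dimensional. *)
From HB Require Import structures.
From mathcomp Require Import all_boot all_order all_algebra.
From mathcomp Require Import all_classical all_reals all_analysis.
Set Implicit Arguments. Unset Strict Implicit. Unset Printing Implicit Defensive.
Import Order.TTheory GRing.Theory Num.Theory.
Import numFieldNormedType.Exports.
Local Open Scope classical_set_scope.
Local Open Scope ring_scope.

Definition finite_dim (R : realType) (V : normedModType R) : Prop :=
  exists (n : nat) (b : 'I_n -> V),
    forall v : V, exists c : 'I_n -> R, v = \sum_(i < n) c i *: b i.

Definition metric_line (R : realType) (V : normedModType R) (L : set V) : Prop :=
  exists f : R -> V, (forall s t : R, `|f s - f t| = `|s - t|) /\ L = range f.

Definition d_collinear (R : realType) (V : normedModType R) (S : set V) : Prop :=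
  exists L : set V, metric_line L /\ S `<=` L.

Definition natural_order (R : realType) (V : normedModType R) (m : nat)
    (x : 'I_m -> V) : Prop :=
  exists g : V -> R,
    (forall i j : 'I_m, `|g (x i) - g (x j)| = `|x i - x j|) /\
    (forall i j : 'I_m, (i < j)%N -> g (x i) < g (x j)).

Definition FT (R : realType) (V : normedModType R) (m : nat) (x : 'I_m -> V)
    : set V :=
  [set p | forall q : V,
     \sum_(i < m) `|p - x i| <= \sum_(i < m) `|q - x i|].

(* Main.v *)
Require Import Defs.
From HB Require Import structures.
From mathcomp Require Import all_boot all_order all_algebra.
From mathcomp Require Import all_classical all_reals all_analysis.
From mathcomp Require Import lra zify.
Import Order.TTheory GRing.Theory Num.Theory.
Import numFieldNormedType.Exports.
Local Open Scope classical_set_scope.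
Local Open Scope ring_scope.

Lemma between_dist (R : realType) (a c b : R) :
  (a <= c <= b) || (b <= c <= a) -> `|c - a| + `|c - b| = `|a - b|.
Proof.
case/orP=> /andP[h1 h2].
- rewrite (ger0_norm (_ : 0 <= c - a)) ?subr_ge0 //.
  rewrite (distrC c) (distrC a).
  rewrite (ger0_norm (_ : 0 <= b - c)) ?subr_ge0 //.
  rewrite (ger0_norm (_ : 0 <= b - a)) ?subr_ge0 ?(le_trans h1) //.
  lra.
- rewrite (ger0_norm (_ : 0 <= c - b)) ?subr_ge0 //.
  rewrite (distrC c a).
  rewrite (ger0_norm (_ : 0 <= a - c)) ?subr_ge0 //.
  rewrite (ger0_norm (_ : 0 <= a - b)) ?subr_ge0 ?(le_trans h1) //.
  lra.
Qed.

Theorem corollary3p20 (R : realType) (V : normedModType R) (k : nat)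
    (x : 'I_(k.*2.+1) -> V) :
  finite_dim V ->
  d_collinear (range x) ->
  natural_order x ->
  FT x = [set x (inord k)].
Proof.
move=> _ _ [g [giso gmono]].
set n := k.*2.+1.
set c : 'I_n := inord k.
have hc : (c : nat) = k by rewrite /c inordK // ltnS -addnn leq_addr.
have gle : forall i j : 'I_n, (i <= j)%N -> g (x i) <= g (x j).
  move=> i j; rewrite leq_eqVlt; case/orP => [/eqP h|h].
    by have -> : i = j by apply: val_inj.
  by apply/ltW; apply: gmono.
pose S (p : V) := \sum_(i < n) `|p - x i|.
pose T (p : V) (i : 'I_n) := `|p - x i| + `|p - x (rev_ord i)|.
have ST : forall p, \sum_(i < n) T p i = S p *+ 2.
  move=> p; rewrite big_split /= mulr2n; congr (_ + _).
  by rewrite /S [RHS](reindex_inj rev_ord_inj).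
have Tc : forall i, T (x c) i = `|x i - x (rev_ord i)|.
  move=> i; rewrite /T -!giso; apply: between_dist.
  have [ik|ki] := leqP i k.
  - apply/orP; left; apply/andP; split; apply: gle; first by rewrite hc.
    by rewrite hc /=; rewrite ?(-addnn); lia.
  - apply/orP; right; apply/andP; split; apply: gle; first by rewrite hc /=; rewrite ?(-addnn); lia.
    by rewrite hc; exact: ltnW.
have key : forall p, S (x c) + `|p - x c| <= S p.
  move=> p.
  suff : (S (x c) + `|p - x c|) *+ 2 <= S p *+ 2.
    by rewrite !mulr2n => h; lra.
  rewrite mulrnDl -!ST [X in _ <= X](bigD1 c) // [X in X + _ <= _](bigD1 c) //=.
  have rc : rev_ord c = c by apply: val_inj; rewrite /= hc; lia.
  rewrite /T rc subrr normr0 addr0 add0r.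
  rewrite [X in _ <= X]addrC mulr2n lerD2r.
  apply: ler_sum => i _; have := Tc i; rewrite /T => ->.
  rewrite (distrC p (x i)); exact: ler_distD.
rewrite eqEsubset; split => p.
- rewrite /FT /= => /(_ (x c)) hp.
  have h := key p; move: h; rewrite /S => h.
  have : `|p - x c| <= 0 by lra.
  by rewrite normr_le0 subr_eq0 => /eqP.
- move=> /= ->; rewrite /FT /= => q.
  have := key q; rewrite /S => h.
  apply: le_trans h; rewrite lerDl //.
Qed.
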